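(* Let $r(t)\in\mathbb{Z}[t]$. The following are equivalent: (i) $\operatorname{Cong}(r(t)) = 0$; (ii) $r(0)=0$, or there exist $u\in\mathbb{N}$ and $s(t)\in\mathbb{Z}[t]\setminus\mathbb{Z}$ such that $s(t^{u+1})$ divides $r(t)$ in $\mathbb{Z}[t]$.
   Context: $\mathbb{N}=\{1,2,\dots\}$. For $r(t)=\sum_i a_it^i$ and integers $u>j\ge0$, $r_{u,j}(t):=\sum_{i\equiv j\bmod u}a_it^i$. $\operatorname{Cong}(r(t))$ is the non-negative generator of the ideal $\mathbb{Z}\cap\bigcap_{1<u\le\deg(r(t))+1}\big(r_{u,0}(t)\mathbb{Z}[t]+\cdots+r_{u,u-1}(t)\mathbb{Z}[t]\big)$ of $\mathbb{Z}$. *)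

(* Defs.v *)
From HB Require Import structures.
From mathcomp Require Import all_boot all_order all_algebra.
From Stdlib Require Import ClassicalEpsilon.
Set Implicit Arguments. Unset Strict Implicit. Unset Printing Implicit Defensive.
Import Order.TTheory GRing.Theory Num.Theory.
Local Open Scope ring_scope.

Definition rpart (r : {poly int}) (u j : nat) : {poly int} :=
  \poly_(i < size r) (if (i %% u)%N == j then r`_i else 0).

Definition in_part_ideal (r : {poly int}) (u : nat) (m : int) : Prop :=
  exists q : 'I_u -> {poly int}, m%:P = \sum_(j < u) rpart r u j * q j.

(* m lies in Z ∩ ⋂_{1 < u <= deg r + 1} (...);  deg r + 1 = size r *)
Definition in_cong_ideal (r : {poly int}) (m : int) : Prop :=
  forall u : nat, (1 < u)%N -> (u <= size r)%N -> in_part_ideal r u m.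

Definition is_cong_gen (r : {poly int}) (n : nat) : Prop :=
  forall m : int, in_cong_ideal r m <-> (n%:Z %| m)%Z.

Definition Cong (r : {poly int}) : nat :=
  epsilon (inhabits 0%N) (is_cong_gen r).

Definition zdvdp (a b : {poly int}) : Prop := exists q : {poly int}, b = a * q.

(* Main.v *)
Require Import Defs.
From HB Require Import structures.
From mathcomp Require Import all_boot all_order all_algebra.
From Stdlib Require Import ClassicalEpsilon.
Import Order.TTheory GRing.Theory Num.Theory.
Local Open Scope ring_scope.

Lemma coef_rpart (r : {poly int}) u j i :
  (rpart r u j)`_i = if ((i %% u)%N == j) then r`_i else 0.
Proof.
rewrite /rpart coef_poly; case: ltnP => // H.
by rewrite nth_default // if_same.
Qed.

Lemma rpart_sum (r : {poly int}) u : (0 < u)%N -> r = \sum_(j < u) rpart r u j.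
Proof.
move=> u0; apply/polyP => i; rewrite coef_sum.
rewrite (bigD1 (Ordinal (ltn_pmod i u0))) //= coef_rpart eqxx big1 ?addr0 //.
move=> j /eqP Hj; rewrite coef_rpart; case: eqP => // E.
by case: Hj; apply: val_inj => /=.
Qed.

Lemma ipi0 r u : in_part_ideal r u 0.
Proof. by exists (fun _ => 0); rewrite big1 // => j _; rewrite mulr0. Qed.

Lemma ipiD r u a b : in_part_ideal r u a -> in_part_ideal r u b ->
  in_part_ideal r u (a + b).
Proof.
move=> [qa Ha] [qb Hb]; exists (fun j => qa j + qb j).
by rewrite polyCD Ha Hb -big_split /=; apply: eq_bigr => j _; rewrite mulrDr.
Qed.

Lemma ipiM r u a b : in_part_ideal r u a -> in_part_ideal r u (a * b).
Proof.
move=> [qa Ha]; exists (fun j => qa j * b%:P).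
by rewrite polyCM Ha big_distrl /=; apply: eq_bigr => j _; rewrite mulrA.
Qed.

Lemma iciM r a b : in_cong_ideal r a -> in_cong_ideal r (a * b).
Proof. by move=> H u H1 H2; apply: ipiM; apply: H. Qed.

Lemma ici0 r : in_cong_ideal r 0.
Proof. by move=> u _ _; apply: ipi0. Qed.

Lemma iciB r a b : in_cong_ideal r a -> in_cong_ideal r b -> in_cong_ideal r (a - b).
Proof.
move=> Ha Hb u H1 H2; apply: ipiD; first exact: Ha.
by rewrite -mulN1r mulrC; apply: ipiM; apply: Hb.
Qed.

Lemma gen_exists r : exists n, is_cong_gen r n.
Proof.
case: (classic (exists m, m != 0 /\ in_cong_ideal r m)) => [[m [m0 Hm]]|N]; last first.
  exists 0%N => m; rewrite dvd0z; split => [Hm|/eqP->]; last exact: ici0.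
  by case: (eqVneq m 0) => // m0; case: N; exists m.
pose P n := if excluded_middle_informative ((0 < n)%N /\ in_cong_ideal r n%:Z) then true else false.
have PP n : reflect ((0 < n)%N /\ in_cong_ideal r n%:Z) (P n).
  by rewrite /P; case: excluded_middle_informative => H; constructor.
have exP : exists n, P n.
  exists `|m|%N; apply/PP; split; first by rewrite absz_gt0.
  have [mge|mlt] := lerP 0 m.
    by rewrite gez0_abs.
  by rewrite ltz0_abs // -mulN1r mulrC; apply: iciM.
case: (ex_minnP exP) => n /PP [n0 Hn] Hmin.
exists n => k; split => [Hk|/dvdzP [q ->]]; last by rewrite mulrC; apply: iciM.
have nn0 : n%:Z != 0 by rewrite eqz_nat -lt0n.
have Hmod : in_cong_ideal r (k %% n)%Z.
  have E : (k %% n)%Z = k - (k %/ n)%Z * n by rewrite {2}(divz_eq k n) addrC addKr.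
  by rewrite E; apply: iciB => //; rewrite mulrC; apply: iciM.
apply/dvdzP; exists (k %/ n)%Z.
have ge := modz_ge0 k nn0.
have lt := ltz_mod k nn0.
have E := divz_eq k n.
move: ge lt Hmod E; set t := (k %% n)%Z.
case: t => [[|x]|x] //; first by move=> _ _ _ E; rewrite {1}E addr0.
move=> _ lt Ht _.
have := Hmin x.+1 (introT (PP _) (conj (ltn0Sn x) Ht)).
move=> Hle; move: lt; rewrite ltz_nat => lt.
by have := leq_trans lt Hle; rewrite ltnn.
Qed.

Lemma cong_spec r : is_cong_gen r (Cong r).
Proof. by rewrite /Cong; apply: epsilon_spec; apply: gen_exists. Qed.



Lemma modn_subdvd {w i k} : (k <= i)%N -> (w %| k)%N -> ((i - k) %% w = i %% w)%N.
Proof.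
move=> ki /dvdnP [c Ek]; rewrite -{2}(subnK ki) Ek.
by rewrite addnC modnMDl.
Qed.

Lemma rpart_mul (p q : {poly int}) w j :
  (forall k, ~~ (w %| k)%N -> p`_k = 0) ->
  rpart (p * q) w j = p * rpart q w j.
Proof.
move=> Hp; apply/polyP => i; rewrite coef_rpart !coefM.
have E : forall k : 'I_i.+1, p`_k * (rpart q w j)`_(i - k) =
   if (i %% w)%N == j then p`_k * q`_(i - k) else 0.
  move=> k; rewrite coef_rpart; have ki : (k <= i)%N by rewrite -ltnS.
  case: (boolP (w %| k)%N) => Hk; first by rewrite (modn_subdvd ki Hk); case: ifP; rewrite ?mulr0.
  by rewrite Hp // !mul0r if_same.
under [RHS]eq_bigr do rewrite E.
case: eqP => _ //; by rewrite big1.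
Qed.

Lemma back1 (r s q : {poly int}) w m : (1 < w)%N -> (1 < size s)%N ->
  r = (s \Po 'X^w) * q -> in_part_ideal r w m -> m = 0.
Proof.
move=> w1 s1 Er [qq Hm]; apply/eqP; apply/negPn/negP => m0.
set S := s \Po 'X^w in Er.
have HS : forall k, ~~ (w %| k)%N -> S`_k = 0.
  by move=> k Hk; rewrite /S coef_comp_poly_Xn ?(ltn_trans _ w1) // (negbTE Hk).
have : m%:P = S * \sum_(j < w) rpart q w j * qq j.
  rewrite Hm big_distrr /=; apply: eq_bigr => j _.
  by rewrite Er rpart_mul // mulrA.
move=> E.
have : S %| m%:P by rewrite E dvdp_mulIl.
move/dvdp_leq; rewrite polyC_eq0 => /(_ m0); rewrite size_polyC m0.
have := size_comp_poly s 'X^w; rewrite size_polyXn /= -/S.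
case: (size S) => [|[|n]] //=; move=> /esym /eqP; rewrite muln_eq0 -subn1 subn_eq0 leqNgt s1 /=;
  by rewrite (gtn_eqF (ltnW w1)).
Qed.

Lemma back1_size (r s q : {poly int}) w : r != 0 -> (0 < w)%N -> (1 < size s)%N ->
  r = (s \Po 'X^w) * q -> (w < size r)%N.
Proof.
move=> r0 w1 s1 Er.
have : (s \Po 'X^w) %| r by rewrite Er dvdp_mulIl.
move/(dvdp_leq r0); apply: leq_trans.
have H := size_comp_poly s 'X^w; rewrite size_polyXn /= in H.
have Hw : (w <= (size (s \Po 'X^w)).-1)%N.
  by rewrite H; case: (size s) s1 => [|[|z]] //= _; rewrite mulSn leq_addr.
move: Hw; case: (size _) => [|n] /=; first by rewrite leqn0 (gtn_eqF w1).
by [].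
Qed.

Lemma back0 (r : {poly int}) m : r.[0] = 0 -> in_part_ideal r 2 m -> m = 0.
Proof.
move=> r0 [qq Hm]; have := congr1 (fun p => p.[0]) Hm => /=.
rewrite hornerC horner_sum => ->; apply: big1 => j _.
by rewrite hornerM horner_coef0 coef_rpart -horner_coef0 r0 if_same mul0r.
Qed.

Lemma cong0 r : (forall m, in_cong_ideal r m -> m = 0) -> Cong r = 0%N.
Proof.
move=> H; have := cong_spec r (Cong r); rewrite dvdzz => -[_ /(_ isT)] /H.
by move/eqP; rewrite eqz_nat => /eqP.
Qed.



Definition gpart (r : {poly int}) (w j : nat) : {poly int} :=
  \poly_(k < size r) r`_(k * w + j).

Lemma rpart_g (r : {poly int}) w j : (j < w)%N ->
  rpart r w j = 'X^j * (gpart r w j \Po 'X^w).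
Proof.
move=> jw; have w0 : (0 < w)%N by apply: leq_ltn_trans jw.
apply/polyP => i; rewrite coef_rpart coefXnM coef_comp_poly_Xn // /gpart.
case: eqP => Hi.
  have Ei : i = (i %/ w * w + j)%N by rewrite {1}(divn_eq i w) Hi.
  have ij : (j <= i)%N by rewrite Ei leq_addl.
  rewrite ltnNge ij /=.
  have -> : (i - j = i %/ w * w)%N by rewrite {1}Ei addnK.
  rewrite dvdn_mull // mulnK // coef_poly -Ei.
  case: ltnP => // H; rewrite nth_default //.
  by apply: leq_trans H (leq_div _ _).
case: ltnP => // ij; case: dvdnP => // -[c Ec].
case: Hi; rewrite -(subnK ij) Ec.
by rewrite modnMDl modn_small.
Qed.



Section BigGcd.
Variable F : fieldType.

Fixpoint bgcd (G : nat -> {poly F}) n : {poly F} :=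
  if n is n'.+1 then gcdp (bgcd G n') (G n') else 0.

Lemma dvd_big (G : nat -> {poly F}) n j : (j < n)%N -> bgcd G n %| G j.
Proof.
elim: n => // n IH /=; rewrite ltnS leq_eqVlt => /orP [/eqP ->|jn].
  exact: dvdp_gcdr.
exact: dvdp_trans (dvdp_gcdl _ _) (IH jn).
Qed.

Lemma bezout_big (G : nat -> {poly F}) n : exists a : nat -> {poly F},
  bgcd G n %= \sum_(i < n) a i * G i.
Proof.
elim: n => [|n [a Ha]]; first by exists (fun _ => 0); rewrite !big_ord0 eqpxx.
have [[u1 u2] Hu] := Bezoutp (bgcd G n) (G n).
move: Ha => /eqpP [[c1 c2] /= /andP [c10 c20] Ec].
have EB : bgcd G n = (c2 / c1) *: \sum_(i < n) a i * G i.
  by rewrite mulrC -scalerA -Ec scalerA mulVf // scale1r.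
exists (fun i => if (i < n)%N then u1 * ((c2 / c1) *: a i) else u2).
rewrite big_ord_recr /= ltnn eqp_sym /=.
apply: eqp_trans Hu; rewrite EB /=.
rewrite scaler_sumr mulr_sumr.
have -> : \sum_(i < n) (if (i < n)%N then u1 * ((c2 / c1) *: a i) else u2) * G i
   = \sum_(i < n) u1 * ((c2 / c1) *: (a i * G i)).
  by apply: eq_bigr => i _; rewrite ltn_ord -mulrA scalerAl.
by rewrite eqpxx.
Qed.
End BigGcd.



Local Notation pZtoQ := (map_poly (intr : int -> rat)).

Lemma pZtoQ_inj : injective pZtoQ.
Proof. by apply: map_inj_poly; [apply: intr_inj | rewrite rmorph0]. Qed.

Lemma clear_den w (P : nat -> {poly int}) (b : nat -> {poly rat}) :
  1 = \sum_(j < w) b j * pZtoQ (P j) ->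
  exists N : int, N != 0 /\ exists c : nat -> {poly int},
    N%:P = \sum_(j < w) c j * P j.
Proof.
move=> H1.
pose sq j := projT1 (rat_poly_scale (b j)).
pose sa j := s2val (projT2 (rat_poly_scale (b j))).
have sa0 j : sa j != 0 by rewrite /sa; case: (projT2 _) => /=.
have Eb j : b j = (sa j)%:~R^-1 *: pZtoQ (sq j).
  by rewrite /sa /sq; case: (rat_poly_scale (b j)) => q [a /= _ ->].
pose N := \prod_(i < w) sa i.
pose c j := (\prod_(i < w | (i : nat) != j) sa i) *: sq j.
exists N; split; first by rewrite /N; apply/prodf_neq0 => i _.
exists c; apply: pZtoQ_inj.
rewrite map_polyC /=.
have -> : ((N%:~R : rat)%:P) = (N%:~R : rat) *: (1 : {poly rat}) by rewrite -mul_polyC mulr1.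
rewrite H1 scaler_sumr rmorph_sum /=; apply: eq_bigr => j _.
rewrite rmorphM /= scalerAl; congr (_ * _).
rewrite Eb scalerA /c map_polyZ /=; congr (_ *: _).
rewrite /N (bigD1 j) //= rmorphM /= mulrC mulrA mulVf ?intr_eq0 // mul1r.
congr (intr _); by apply: eq_bigl => i.
Qed.





Lemma core (r : {poly int}) w : r.[0] != 0 -> (1 < w)%N ->
  (exists m, m != 0 /\ in_part_ideal r w m) \/
  (exists s : {poly int}, (1 < size s)%N /\ zdvdp (s \Po 'X^w) r).
Proof.
move=> r0 w1; have w0 : (0 < w)%N by apply: ltnW.
pose G j := pZtoQ (gpart r w j).
have [a Ha] := @bezout_big _ G w.
set D := @bgcd _ G w in Ha.
have DG j : (j < w)%N -> D %| G j by apply: dvd_big.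
have r0' : r`_0 != 0 by rewrite -horner_coef0.
have sr : (0 < size r)%N.
  by rewrite lt0n size_poly_eq0; apply: contraNneq r0' => ->; rewrite coef0.
have G00 : G 0%N != 0.
  rewrite -size_poly_eq0 size_rat_int_poly size_poly_eq0.
  apply: contraNneq r0' => E; have := congr1 (fun p : {poly int} => p`_0) E.
  by rewrite coef0 /gpart coef_poly sr mul0n addn0 => ->.
have D0 : D != 0.
  by apply/eqP => E; move: (DG 0%N w0); rewrite E dvd0p (negbTE G00).
case: (leqP (size D) 1) => HD.
  left.
  set S := \sum_(i < w) a i * G i in Ha.
  have S1 : size S = 1%N.
    rewrite -(eqp_size Ha); apply/eqP; rewrite eqn_leq HD lt0n size_poly_eq0 D0.
    by [].
  have ES : S = (S`_0)%:P by apply: size1_polyC; rewrite S1.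
  have S00 : S`_0 != 0.
    apply/eqP => E0; move: S1; rewrite ES E0 size_polyC eqxx //.
  set e := S`_0 in ES S00.
  pose b i := (e^-1 *: a i) \Po 'X^w.
  have E1 : 1 = \sum_(i < w) b i * (G i \Po 'X^w).
    have E0 : 1 = \sum_(i < w) (e^-1 *: a i) * G i.
      under eq_bigr do rewrite -scalerAl.
      by rewrite -scaler_sumr -/S ES -mul_polyC -polyCM mulVf.
    have := congr1 (comp_poly 'X^w) E0; rewrite comp_polyC linear_sum /= polyC1 => {1}->.
    by apply: eq_bigr => i _; rewrite comp_polyM.
  pose R j := pZtoQ (rpart r w j).
  have EG (i : 'I_w) : 'X^i * (G i \Po 'X^w) = R i.
    by rewrite /R rpart_g // rmorphM /= map_polyXn map_comp_poly map_polyXn.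
  have EX : 'X^(w.-1) = \sum_(i < w) (b i * 'X^(w.-1 - i)) * R i.
    rewrite -[LHS]mulr1 E1 mulr_sumr; apply: eq_bigr => i _.
    have iw : (i <= w.-1)%N by rewrite -ltnS prednK.
    rewrite -EG [RHS]mulrA -[b i * _ * _]mulrA -exprD subnK //.
    by rewrite mulrCA mulrA.
  have cop : coprimep ('X^(w.-1)) (R 0%N).
    apply: coprimep_expl; rewrite coprimep_sym coprimepX /root horner_coef0.
    by rewrite coef_map /= coef_rpart mod0n eqxx intr_eq0.
  have /Bezout_eq1_coprimepP [[u1 u2] /= Hu] := cop.
  pose bb j := u1 * (b j * 'X^(w.-1 - j)) + (if j == 0%N then u2 else 0).
  have E2 : 1 = \sum_(j < w) bb j * pZtoQ (rpart r w j).
    rewrite -Hu EX mulr_sumr /bb.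
    under [RHS]eq_bigr do rewrite mulrDl -mulrA.
    rewrite big_split /=; congr (_ + _).
    rewrite (bigD1 (@Ordinal w 0 w0)) //= big1 ?addr0 //.
    move=> j /eqP Hj.
    case: eqP => [E|]; last by rewrite mul0r.
    by case: Hj; apply: val_inj.
  have [N [N0 [cc Ecc]]] := @clear_den w (fun j => rpart r w j) bb E2.
  exists N; split => //; exists (fun j : 'I_w => cc j).
  by rewrite Ecc; apply: eq_bigr => j _; rewrite mulrC.
right.
have [p1 [c c0 Ec] _] := dvdpP_rat_int (DG 0%N w0).
have Hj (j : 'I_w) : p1 %| gpart r w j.
  by rewrite -dvdp_rat_int -(dvdpZl _ _ c0) -Ec; apply: DG.
pose s := zprimitive p1.
pose rj (j : 'I_w) := sval (dvdpP_int (Hj j)).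
have Erj (j : 'I_w) : gpart r w j = s * rj j by rewrite /rj; case: (dvdpP_int _).
exists s; split.
  by rewrite size_zprimitive -size_rat_int_poly -(size_scale _ c0) -Ec.
exists (\sum_(j < w) 'X^j * (rj j \Po 'X^w)).
rewrite {1}(@rpart_sum r w w0) mulr_sumr; apply: eq_bigr => j _.
by rewrite rpart_g // Erj comp_polyM mulrCA.
Qed.



Theorem proposition3p4 (r : {poly int}) (hr : r != 0) :
  Cong r = 0%N <->
  (r.[0] = 0 \/
   exists (u : nat) (s : {poly int}),
     (0 < u)%N /\ (1 < size s)%N /\ zdvdp (s \Po 'X^(u.+1)) r).
Proof.
split.
  move=> C0; case: (classic (r.[0] = 0)) => [->|H0]; first by left.
  right; case: (classic (exists (u : nat) (s : {poly int}),
     (0 < u)%N /\ (1 < size s)%N /\ zdvdp (s \Po 'X^(u.+1)) r)) => // Hno.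
  exfalso.
  have r0 : r.[0] != 0 by apply/eqP.
  have Hw : forall w, (1 < w)%N -> exists m, m != 0 /\ in_part_ideal r w m.
    move=> [|[|w]] // w1; case: (@core r w.+2 r0 w1) => // -[s [s1 [q Eq]]].
    by case: Hno; exists w.+1, s; split => //; split => //; exists q.
  have Hall : forall n, exists m, m != 0 /\ forall w, (1 < w)%N -> (w <= n)%N ->
      in_part_ideal r w m.
    elim => [|n [m [m0 Hm]]].
      by exists 1; split => // -[|w].
    case: (boolP (1 < n.+1)%N) => [h1|hn].
      have [m' [m'0 Hm']] := Hw _ h1.
      exists (m * m'); split; first by rewrite mulf_neq0.
      move=> w w1; rewrite leq_eqVlt => /orP [/eqP ->|wn].
        by rewrite mulrC; apply: ipiM.
      by apply: ipiM; apply: Hm.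
    exists m; split => // w w1; rewrite leq_eqVlt => /orP [/eqP E|wn].
      by move: hn; rewrite -E w1.
    by apply: Hm.
  have [m [m0 Hm]] := Hall (size r).
  have : in_cong_ideal r m by move=> w w1 ws; apply: Hm.
  move/(cong_spec r m); rewrite C0 dvd0z => /eqP E.
  by move: m0; rewrite E eqxx.
case => [H0 | [u [s [u0 [s1 [q Eq]]]]]]; apply: cong0 => m Hm.
  apply: (@back0 r m H0); apply: Hm => //.
  case: (leqP (size r) 1) => // sr.
  have := size1_polyC sr; rewrite -horner_coef0 H0 => E.
  by move: hr; rewrite E eqxx.
apply: (@back1 r s q u.+1) => //.
apply: Hm => //; apply: ltnW; exact: (@back1_size r s q u.+1).
Qed.
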